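(* Under the standing assumptions below, let $k\in P$ and let $x\in D_k$ be decomposable. Then $x$ can be written in terms of indecomposable elements: there exist finitely many $\ell_1,\dots,\ell_n\in P$ with $\ell_i<k$ and indecomposable elements $x_i\in M_{\ell_i}$ (i.e. $x_i\in M_{\ell_i}\setminus D_{\ell_i}$) such that $x=\sum_{i=1}^n t^{\,k-\ell_i}x_i$.
   Context: Standing assumptions: $R$ is a principal ideal domain; $P$ is a lattice with a compatible abelian group structure ($(P,+,0)$ abelian group, $a\le b\Rightarrow a+c\le b+c$). $U_0=\{s\in P:s\ge 0\}$, $R[U_0]$ the monoid ring (finite sums $\sum c_st^s$, $c_s\in R$), graded by $\deg(ct^s)=s$. $M=\bigoplus_{a\in P}M_a$ is a $P$-graded $R[U_0]$-module (persistence module) that is graded projective, with each $M_a$ a finitely generated $R$-module. For $r\in P$, $D_r=\sum_{q<r}t^{\,r-q}M_q\subseteq M_r$ (sum of the images of structure maps from degrees $q<r$). An element $x\in M_r$ is decomposable if $x\in D_r$ and indecomposable if $x\in M_r\setminus D_r$. *)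

(* Defs.v *)
From HB Require Import structures.
From mathcomp Require Import all_boot all_order all_algebra.
Set Implicit Arguments. Unset Strict Implicit. Unset Printing Implicit Defensive.
Import GRing.Theory.
Local Open Scope ring_scope.

Definition is_ideal (R : idomainType) (I : R -> Prop) : Prop :=
  [/\ I 0, (forall x y, I x -> I y -> I (x + y)) & (forall r x, I x -> I (r * x))].

Definition PID (R : idomainType) : Prop :=
  forall I : R -> Prop, is_ideal I -> exists a : R, forall x, I x <-> exists r, x = r * a.

Definition lattice_ordered_group (P : zmodType) (le : rel P) : Prop :=
  (forall a, le a a) /\
  (forall a b, le a b -> le b a -> a = b) /\
  (forall a b c, le a b -> le b c -> le a c) /\
  (forall a b, exists j, le a j /\ le b j /\ forall u, le a u -> le b u -> le j u) /\
  (forall a b, exists m, le m a /\ le m b /\ forall u, le u a -> le u b -> le u m) /\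
  (forall a b c, le a b -> le (a + c) (b + c)).

(** A P-graded R[U_0]-module, presented (equivalently) as a persistence module:
    R-modules M_a for a : P and R-linear structure maps M_a -> M_b for a <= b
    (the action of t^(b-a)), satisfying t^0 = id and t^s t^r = t^(r+s). *)
Record pmod (R : nzRingType) (P : Type) (le : rel P) := PMod {
  obj :> P -> lmodType R;
  smap : forall a b, le a b -> obj a -> obj b;
  smap_linear : forall a b (h : le a b) (c : R) (x y : obj a),
      smap h (c *: x + y) = c *: smap h x + smap h y;
  smap_id : forall a (h : le a a) (x : obj a), smap h x = x;
  smap_comp : forall a b c (h1 : le a b) (h2 : le b c) (h3 : le a c) (x : obj a),
      smap h2 (smap h1 x) = smap h3 x
}.

Arguments smap {R P le} p {a b} h _.

Record phom (R : nzRingType) (P : Type) (le : rel P) (M N : pmod R le) := PHom {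
  hfun :> forall a, M a -> N a;
  hfun_linear : forall a (c : R) (x y : M a), hfun (c *: x + y) = c *: hfun x + hfun y;
  hfun_nat : forall a b (h : le a b) (x : M a),
      hfun (smap M h x) = smap N h (hfun x)
}.
Arguments hfun {R P le M N} p a _.

Definition graded_projective (R : nzRingType) (P : Type) (le : rel P) (M : pmod R le) : Prop :=
  forall (N L : pmod R le) (g : phom N L) (f : phom M L),
    (forall a (y : L a), exists x : N a, g a x = y) ->
    exists h : phom M N, forall a (x : M a), g a (h a x) = f a x.

Definition fin_gen (R : nzRingType) (V : lmodType R) : Prop :=
  exists s : seq V, forall x : V, exists c : 'I_(size s) -> R,
      x = \sum_(i < size s) c i *: s`_i.

(** x \in D_r = sum_{q < r} t^(r-q) M_q  (finite sums of images of structure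
    maps from degrees q < r, i.e. q <= r and q <> r). *)
Definition decomposable (R : nzRingType) (P : eqType) (le : rel P) (M : pmod R le)
    (r : P) (x : M r) : Prop :=
  exists (n : nat) (q : 'I_n -> P) (hle : forall i, le (q i) r) (y : forall i, M (q i)),
    (forall i, q i != r) /\ x = \sum_(i < n) smap M (hle i) (y i).

Arguments decomposable {R P le} M {r} x.

Definition indecomposable (R : nzRingType) (P : eqType) (le : rel P) (M : pmod R le)
    (r : P) (x : M r) : Prop := ~ decomposable M x.
Arguments indecomposable {R P le} M {r} x.

(* Main.v *)
From HB Require Import structures.
Require Import Defs.
From mathcomp Require Import all_boot all_order all_algebra.
From mathcomp Require Import boolp.
From Stdlib Require List Classical_Prop.
Set Implicit Arguments. Unset Strict Implicit. Unset Printing Implicit Defensive.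
Import GRing.Theory.
Local Open Scope ring_scope.

Definition fsup (R : nzRingType) (P : eqType) (le : rel P) (M : pmod R le)
  (a : P) (f : forall b, M b) : Prop :=
  exists s : seq P, forall b, f b != 0 -> (b \in s) && le b a.

Arguments fsup {R P le} M a f.
Definition Nt (R : nzRingType) (P : eqType) (le : rel P) (M : pmod R le) (a : P) :=
  {f : forall b, M b | @fsup R P le M a f}.


Section Free.
Variables (R : nzRingType) (P : eqType) (le : rel P) (M : pmod R le) (a : P).
Local Notation N := (@Nt R P le M a).
HB.instance Definition _ := gen_eqMixin N.
HB.instance Definition _ := gen_choiceMixin N.

Lemma Neq (u v : N) : (forall b, proj1_sig u b = proj1_sig v b) -> u = v.
Proof.
case: u => f hf; case: v => g hg /= e.
have efg : f = g by apply: functional_extensionality_dep.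
subst g; congr exist; exact: Prop_irrelevance.
Qed.

Lemma fsup0 : fsup M a (fun b => 0).
Proof. by exists [::] => b; rewrite eqxx. Qed.

Lemma fsupD (f g : forall b, M b) : fsup M a f -> fsup M a g -> fsup M a (fun b => f b + g b).
Proof.
move=> [s1 h1] [s2 h2]; exists (s1 ++ s2) => b nz.
case: (eqVneq (f b) 0) => ef.
- have : g b != 0 by move: nz; rewrite ef add0r.
  by move/h2/andP=> [i l]; rewrite mem_cat i l orbT.
- by move: (h1 b ef) => /andP [i l]; rewrite mem_cat i l.
Qed.

Lemma fsupZ (c : R) (f : forall b, M b) : fsup M a f -> fsup M a (fun b => c *: f b).
Proof.
move=> [s h]; exists s => b nz; apply: h; apply: contraNneq nz => ->; by rewrite scaler0.
Qed.

Lemma fsupN (f : forall b, M b) : fsup M a f -> fsup M a (fun b => - f b).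
Proof.
move=> [s h]; exists s => b nz; apply: h; apply: contraNneq nz => ->; by rewrite oppr0.
Qed.

Definition Nzero : N := exist _ _ fsup0.
Definition Nadd (u v : N) : N := exist _ _ (fsupD (proj2_sig u) (proj2_sig v)).
Definition Nopp (u : N) : N := exist _ _ (fsupN (proj2_sig u)).
Definition Nscale (c : R) (u : N) : N := exist _ _ (fsupZ c (proj2_sig u)).

Lemma NaddA : associative Nadd. Proof. by move=> u v w; apply: Neq => b /=; rewrite addrA. Qed.
Lemma NaddC : commutative Nadd. Proof. by move=> u v; apply: Neq => b /=; rewrite addrC. Qed.
Lemma Nadd0 : left_id Nzero Nadd. Proof. by move=> u; apply: Neq => b /=; rewrite add0r. Qed.
Lemma NaddN : left_inverse Nzero Nopp Nadd. Proof. by move=> u; apply: Neq => b /=; rewrite addNr. Qed.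

HB.instance Definition _ := GRing.isZmodule.Build N NaddA NaddC Nadd0 NaddN.

Lemma NscaleA c d (u : N) : Nscale c (Nscale d u) = Nscale (c * d) u.
Proof. by apply: Neq => b /=; rewrite scalerA. Qed.
Lemma Nscale1 : left_id 1 Nscale. Proof. by move=> u; apply: Neq => b /=; rewrite scale1r. Qed.
Lemma NscaleDr : right_distributive Nscale +%R.
Proof. by move=> c u v; apply: Neq => b /=; rewrite scalerDr. Qed.
Lemma NscaleDl v : {morph Nscale^~ v: c d / c + d}.
Proof. by move=> c d; apply: Neq => b /=; rewrite scalerDl. Qed.

HB.instance Definition _ := GRing.Zmodule_isLmodule.Build R N NscaleA Nscale1 NscaleDr NscaleDl.

End Free.

Section Gen.
Variables (R : nzRingType) (P : eqType) (le : rel P) (M : pmod R le).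
Hypothesis hrefl : forall a, le a a.
Hypothesis htr : forall a b c, le a b -> le b c -> le a c.

Local Notation val := proj1_sig.

Lemma smapD a b (h : le a b) (x y : M a) : smap M h (x + y) = smap M h x + smap M h y.
Proof. by have := @smap_linear _ _ _ M _ _ h 1 x y; rewrite !scale1r. Qed.

Lemma smap0 a b (h : le a b) : smap M h 0 = 0.
Proof. by have := @smap_linear _ _ _ M _ _ h (-1) 0 0; rewrite scaler0 add0r scaleN1r addNr. Qed.

Definition tr (a b : P) (m : M b) : M a :=
  match @idP (le b a) with ReflectT h => smap M h m | ReflectF _ => 0 end.

Lemma trE a b (h : le b a) (m : M b) : tr a m = smap M h m.
Proof.
rewrite /tr; destruct (@idP (le b a)) as [h'|nh]; last by rewrite h in nh.
by rewrite (bool_irrelevance h' h).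
Qed.

Lemma trN a b (m : M b) : ~~ le b a -> tr a m = 0.
Proof. by move=> nh; rewrite /tr; destruct (@idP (le b a)) as [h|] => //; rewrite h in nh. Qed.

Lemma trL a b (c : R) (x y : M b) : tr a (c *: x + y) = c *: tr a x + tr a y.
Proof.
case: (boolP (le b a)) => h; first by rewrite !(trE h) smap_linear.
by rewrite !trN // scaler0 addr0.
Qed.

Lemma trD a b (x y : M b) : tr a (x + y) = tr a x + tr a y.
Proof. by have := trL a 1 x y; rewrite !scale1r. Qed.

Lemma tr0 a b : tr a (0 : M b) = 0.
Proof. by have := trL a (-1) (0 : M b) 0; rewrite scaler0 add0r scaleN1r addNr. Qed.

Lemma tr_comp a b c (m : M c) : le c b -> le b a -> tr a (tr b m) = tr a m.
Proof.
move=> h1 h2; rewrite (trE h1) (trE h2) (trE (htr h1 h2)).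
exact: smap_comp.
Qed.

Lemma tr_sum a b (I : Type) (r : seq I) (F : I -> M b) :
  tr a (\sum_(i <- r) F i) = \sum_(i <- r) tr a (F i).
Proof. exact: (big_morph _ (@trD a b) (@tr0 a b)). Qed.

Lemma fsup_mono a c (h : le a c) f : fsup M a f -> fsup M c f.
Proof.
move=> [s hs]; exists s => b /hs /andP [-> l] /=; exact: htr l h.
Qed.

Definition Nsmap a c (h : le a c) (u : Nt M a) : Nt M c :=
  exist _ (val u) (fsup_mono h (proj2_sig u)).

Definition Npmod : pmod R le.
refine (@PMod R P le (fun a => Nt M a : lmodType R) Nsmap _ _ _).
- by move=> a b h c x y; apply: Neq.
- by move=> a h x; apply: Neq.
- by move=> a b c h1 h2 h3 x; apply: Neq.
Defined.

Definition supp a (u : Nt M a) : seq P := undup (val (cid (proj2_sig u))).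

Lemma supp_mem a (u : Nt M a) b : val u b != 0 -> b \in supp u.
Proof.
move=> nz; rewrite /supp mem_undup; case: (cid _) => s hs /=.
by case/andP: (hs b nz).
Qed.

Lemma supp_le a (u : Nt M a) b : val u b != 0 -> le b a.
Proof. by move=> nz; case: (proj2_sig u) => s hs; case/andP: (hs b nz). Qed.

Definition gfun a (u : Nt M a) : M a := \sum_(b <- supp u) tr a (val u b).

Lemma sum_indep a (f : forall b, M b) (s1 s2 : seq P) : uniq s1 -> uniq s2 ->
  (forall b, f b != 0 -> b \in s1) -> (forall b, f b != 0 -> b \in s2) ->
  \sum_(b <- s1) tr a (f b) = \sum_(b <- s2) tr a (f b).
Proof.
move=> u1 u2 h1 h2.
have E s : \sum_(b <- s) tr a (f b) = \sum_(b <- s | f b != 0) tr a (f b).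
  rewrite [RHS]big_mkcond /=; apply: eq_bigr => b _.
  by case: eqP => // ->; rewrite tr0.
rewrite !E -!(big_filter _ (fun b => f b != 0)); apply: perm_big.
apply: uniq_perm; try exact: filter_uniq.
move=> b; rewrite !mem_filter; case: (boolP (f b != 0)) => //= nz.
by rewrite (h1 _ nz) (h2 _ nz).
Qed.

Lemma gfunE a (u : Nt M a) s : uniq s -> (forall b, val u b != 0 -> b \in s) ->
  gfun u = \sum_(b <- s) tr a (val u b).
Proof. by move=> us hs; apply: sum_indep => //; [exact: undup_uniq | exact: supp_mem]. Qed.

Definition gphom : phom Npmod M.
refine (@PHom R P le Npmod M gfun _ _).
- move=> a c x y.
  pose s := undup (supp (c *: x + y) ++ supp x ++ supp y).
  have us : uniq s by exact: undup_uniq.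
  rewrite (@gfunE _ (c *: x + y) s us); last first.
    by move=> b /supp_mem hb; rewrite mem_undup mem_cat hb.
  rewrite (@gfunE _ x s us); last first.
    by move=> b /supp_mem hb; rewrite mem_undup !mem_cat hb orbT.
  rewrite (@gfunE _ y s us); last first.
    by move=> b /supp_mem hb; rewrite mem_undup !mem_cat hb !orbT.
  rewrite scaler_sumr -big_split /=; apply: eq_bigr => b _.
  exact: trL.
- move=> a c h x /=.
  rewrite (@gfunE _ (Nsmap h x) (supp x)); last 2 first.
  - exact: undup_uniq.
  - by move=> b nz; exact: (@supp_mem _ x b nz).
  rewrite /gfun.
  rewrite (big_morph _ (smapD h) (smap0 h)).
  apply: eq_bigr => b _ /=.
  case: (eqVneq (val x b) 0) => e.
    by rewrite e !tr0 smap0.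
  have hb := supp_le e.
  rewrite (trE hb) (trE (htr hb h)); symmetry; exact: smap_comp.
Defined.

Definition delta a (y : M a) : forall b, M b := fun b =>
  match a =P b with ReflectT e => eq_rect a (fun d => M d) y b e | ReflectF _ => 0 end.

Lemma fsup_delta a (y : M a) : fsup M a (delta y).
Proof.
exists [:: a] => b; rewrite /delta; case: eqP => [e|]; last by rewrite eqxx.
by case: b / e => _; rewrite inE eqxx hrefl.
Qed.

Lemma delta_self a (y : M a) : delta y a = y.
Proof. by rewrite /delta; case: eqP => [e|] //; rewrite (eq_irrelevance e erefl). Qed.

Lemma delta_other a (y : M a) b : b != a -> delta y b = 0.
Proof. by move=> nb; rewrite /delta; case: eqP => // e; rewrite e eqxx in nb. Qed.

Lemma gsurj a (y : M a) : exists x : Npmod a, gphom a x = y.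
Proof.
exists (exist _ (delta y) (fsup_delta y)) => /=.
rewrite (@gfunE _ _ [:: a]) //=; last first.
  by move=> b; case: (eqVneq b a) => [->|nb]; rewrite ?inE ?eqxx // delta_other // eqxx.
by rewrite big_seq1 delta_self (trE (hrefl a)) smap_id.
Qed.

Definition idM : phom M M.
refine (@PHom R P le M M (fun a x => x) _ _) => //.
Defined.

Lemma retract : graded_projective M ->
  exists h : phom M Npmod, forall a x, gfun (h a x) = x.
Proof.
move=> hp; have [h hh] := hp _ _ gphom idM gsurj.
by exists h => a x; exact: hh a x.
Qed.

Definition Rep l (y : M l) (s : seq {d : P & M d}) : Prop :=
  (forall p, List.In p s -> [/\ le (tag p) l, tag p != l & indecomposable M (tagged p)])
  /\ y = \sum_(p <- s) tr l (tagged p).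

Lemma rep_sum l (L : seq P) (F : P -> M l) (C : pred P) :
  (forall b, b \in L -> C b -> exists s, Rep (F b) s) ->
  exists s, Rep (\sum_(b <- L | C b) F b) s.
Proof.
elim: L => [|b L IH] H.
  by exists [::]; split => //; rewrite !big_nil.
have [s2 [H2 E2]] : exists s, Rep (\sum_(b <- L | C b) F b) s.
  by apply: IH => c hc; apply: H; rewrite inE hc orbT.
rewrite big_cons; case: ifP => Cb; last by exists s2.
have [s1 [H1 E1]] : exists s, Rep (F b) s by apply: H => //; exact: mem_head.
exists (s1 ++ s2); split.
  by move=> p hp; case: (List.in_app_or _ _ _ hp) => hq; [exact: H1 | exact: H2].
by rewrite big_cat /= -E1 -E2.
Qed.

Hypothesis hanti : forall a b, le a b -> le b a -> a = b.

Lemma sum_trtr l b (s : seq {d : P & M d}) : le b l ->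
  (forall p, List.In p s -> le (tag p) b) ->
  \sum_(p <- s) tr l (tr b (tagged p)) = \sum_(p <- s) tr l (tagged p).
Proof.
move=> hb; elim: s => [|p s IH] H; first by rewrite !big_nil.
rewrite !big_cons IH; last by move=> q hq; apply: H; right.
by rewrite tr_comp //; apply: H; left.
Qed.

Lemma rep_lift l b (z : M b) s : le b l -> b != l -> Rep z s -> Rep (tr l z) s.
Proof.
move=> hb nb [H ->]; split.
  move=> p /H [h1 h2 h3]; split => //; first exact: htr h1 hb.
  apply/eqP => e; rewrite e in h1; case/eqP: nb; exact: hanti.
rewrite tr_sum; apply: sum_trtr => // p /H [] //.
Qed.

Lemma count_lt (T : eqType) (p q : pred T) (s : seq T) x :
  (forall y, p y -> q y) -> x \in s -> q x -> ~~ p x -> (count p s < count q s)%N.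
Proof.
move=> pq; elim: s => [//|y s IH]; rewrite inE => /orP [/eqP <-|xs] qx npx /=.
  rewrite qx (negbTE npx) add0n add1n ltnS.
  by apply: sub_count => z; apply: pq.
rewrite -addnS; apply: leq_add (IH xs qx npx).
by case: (boolP (p y)) => // /pq ->.
Qed.

Lemma In_nth (T : Type) (x0 : T) (s : seq T) i : (i < size s)%N -> List.In (nth x0 s i) s.
Proof. by elim: s i => [//|a s IH] [|i] /= hi; [left | right; apply: IH]. Qed.

Lemma and3_1 (A B C : Prop) : [/\ A, B & C] -> A. Proof. by case. Qed.


Section Main.
Variable h : phom M Npmod.
Hypothesis hh : forall a x, gfun (h a x) = x.

Lemma hD a (x y : M a) : h a (x + y) = h a x + h a y.
Proof. by have := hfun_linear h 1 x y; rewrite !scale1r. Qed.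
Lemma h0 a : h a 0 = 0.
Proof. by have := hfun_linear h (-1) (0 : M a) 0; rewrite scaler0 add0r scaleN1r addNr. Qed.
Lemma hZ a c (x : M a) : h a (c *: x) = c *: h a x.
Proof. by have := hfun_linear h c x 0; rewrite addr0 h0 addr0. Qed.
Lemma hsum a (I : Type) (r : seq I) (F : I -> M a) : h a (\sum_(i <- r) F i) = \sum_(i <- r) h a (F i).
Proof. exact: (big_morph _ (@hD a) (@h0 a)). Qed.

Lemma val_sum a (I : Type) (r : seq I) (F : I -> Nt M a) d :
  val (\sum_(i <- r) F i) d = \sum_(i <- r) val (F i) d.
Proof. by apply: (big_morph (fun u : Nt M a => val u d)). Qed.

Variables (k : P) (gs : seq (M k)).
Hypothesis hgs : forall x : M k, exists c : 'I_(size gs) -> R, x = \sum_(i < size gs) c i *: gs`_i.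

Definition S := flatten [seq supp (h k m) | m <- gs].

Lemma claimA l (hl : le l k) (y : M l) d : val (h l y) d != 0 -> d \in S.
Proof.
move=> nz; apply: contraNT nz => nS; apply/eqP.
have -> : val (h l y) d = val (h k (smap M hl y)) d by rewrite hfun_nat.
case: (hgs (smap M hl y)) => c ->.
rewrite hsum val_sum big1 // => i _.
rewrite hZ /=.
suff -> : val (h k gs`_i) d = 0 by rewrite scaler0.
apply/eqP; apply: contraNT nS => nz; apply/flatten_mapP.
exists gs`_i; first exact: mem_nth.
exact: supp_mem.
Qed.

Lemma claimB l (y : M l) : decomposable M y -> val (h l y) l = 0.
Proof.
case=> n [q [hle [ys [hq ->]]]].
rewrite hsum val_sum big1 // => i _.
rewrite hfun_nat /=.
apply/eqP; apply: contraT => nz.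
case/negP: (hq i); apply/eqP; exact: hanti (hle i) (supp_le nz).
Qed.

Definition mu l := count (fun d => le d l && (d != l)) (undup S).

Lemma mu_lt l b : le b l -> b != l -> b \in S -> (mu b < mu l)%N.
Proof.
move=> hb nb bS; apply: (@count_lt _ _ _ _ b).
- move=> d /andP [hd nd]; rewrite (htr hd hb) /=.
  apply/eqP => e; rewrite e in hd; case/negP: nd; apply/eqP; rewrite e; exact: hanti hd hb.
- by rewrite mem_undup.
- by rewrite hb nb.
- by rewrite eqxx andbF.
Qed.

Lemma main n : forall l, le l k -> (mu l < n)%N -> forall y : M l, decomposable M y ->
  exists s, Rep y s.
Proof.
elim: n => [//|n IH] l hl hmu y hy.
have E : y = \sum_(b <- supp (h l y) | val (h l y) b != 0) tr l (val (h l y) b).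
  rewrite -[LHS](hh y) /gfun [RHS]big_mkcond /=; apply: eq_bigr => b _.
  by case: eqP => // ->; rewrite tr0.
rewrite E; apply: rep_sum => b _ nz.
have hbl := supp_le nz.
have hbnl : b != l.
  apply/eqP => e; move: nz; rewrite e claimB // eqxx //.
have hbS := claimA hl nz.
case: (Classical_Prop.classic (decomposable M (val (h l y) b))) => [dz|iz].
- have [s hs] := IH b (htr hbl hl) (leq_trans (mu_lt hbl hbnl hbS) hmu) _ dz.
  by exists s; apply: rep_lift.
- exists [:: existT (fun d => M d) b (val (h l y) b)]; split.
    by move=> p [<-|[]]; split.
  by rewrite big_cons big_nil addr0.
Qed.

End Main.


Lemma final : graded_projective M -> (forall a, fin_gen (M a)) ->
  forall (k : P) (x : M k), decomposable M x ->
  exists (n : nat) (l : 'I_n -> P) (hle : forall i, le (l i) k) (xs : forall i, M (l i)),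
    [/\ (forall i, l i != k),
        (forall i, indecomposable M (xs i))
      & x = \sum_(i < n) smap M (hle i) (xs i)].
Proof.
move=> hp hfg k x hx.
have [h hh] := retract hp.
have [gs hgs] := hfg k.
have [s [H Hx]] := main hh hgs (hrefl k) (ltnSn (mu h gs k)) hx.
pose x0 := existT (fun d => M d) k 0.
exists (size s), (fun i => tag (nth x0 s i)),
  (fun i => and3_1 (H _ (In_nth x0 (ltn_ord i)))), (fun i => tagged (nth x0 s i)).
split.
- by move=> i; case: (H _ (In_nth x0 (ltn_ord i))).
- by move=> i; case: (H _ (In_nth x0 (ltn_ord i))).
- rewrite {1}Hx (big_nth x0) big_mkord; apply: eq_bigr => i _; exact: trE.
Qed.

End Gen.

Unset Implicit Arguments.

Theorem lemma4p5 (R : idomainType) (P : zmodType) (le : rel P) (M : pmod R le) :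
  PID R ->
  lattice_ordered_group le ->
  graded_projective M ->
  (forall a : P, fin_gen (M a)) ->
  forall (k : P) (x : M k), decomposable M x ->
  exists (n : nat) (l : 'I_n -> P) (hle : forall i, le (l i) k) (xs : forall i, M (l i)),
    [/\ (forall i, l i != k),
        (forall i, indecomposable M (xs i))
      & x = \sum_(i < n) smap M (hle i) (xs i)].
Proof.
move=> _ [hrefl [hanti [htr _]]].
exact: final.
Qed.
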